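(* Let $k$ be a positive integer and let $G$ be a $2k$-connected $(P_2\cup kP_1)$-free graph. Let $u,v$ be distinct vertices of $G$ and let $P$ be a longest $(u,v)$-path in $G$. Then every component of $G-V(P)$ consists of a single vertex; equivalently, $V(G)\setminus V(P)$ is an independent set.
   Context: All graphs are finite and simple. For a graph $H$, a graph $G$ is $H$-free if $G$ contains no induced subgraph isomorphic to $H$; $P_2\cup kP_1$ is the disjoint union of an edge and $k$ isolated vertices. A $(u,v)$-path is a path with endpoints $u$ and $v$. *)

(* Defs.v *)
From mathcomp Require Import all_boot.
Set Implicit Arguments. Unset Strict Implicit. Unset Printing Implicit Defensive.

Definition simple_graph (T : finType) (e : rel T) : Prop :=
  symmetric e /\ irreflexive e.

Definition is_path (T : finType) (e : rel T) (x y : T) (p : seq T) : bool :=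
  [&& path e x p, last x p == y & uniq (x :: p)].

Definition path_vertices (T : finType) (x : T) (p : seq T) : {set T} :=
  [set z | z \in x :: p].

Definition longest_path (T : finType) (e : rel T) (x y : T) (p : seq T) : Prop :=
  is_path e x y p /\ forall q : seq T, is_path e x y q -> size q <= size p.

Definition connected_avoiding (T : finType) (e : rel T) (S : {set T}) : Prop :=
  forall x y : T, x \notin S -> y \notin S ->
    exists p : seq T, is_path e x y p && all (fun z => z \notin S) (x :: p).

Definition k_connected (T : finType) (e : rel T) (k : nat) : Prop :=
  k < #|T| /\ forall S : {set T}, #|S| < k -> connected_avoiding e S.

Definition has_induced_P2_kP1 (T : finType) (e : rel T) (k : nat) : Prop :=
  exists (a b : T) (X : {set T}),
    [/\ #|X| = k, a \notin X, b \notin X, a != b & e a b] /\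
    (forall x y, x \in X -> y \in X -> ~~ e x y) /\
    (forall x, x \in X -> ~~ e a x && ~~ e b x).

Definition P2_kP1_free (T : finType) (e : rel T) (k : nat) : Prop :=
  ~ has_induced_P2_kP1 e k.

(* Main.v *)
Require Import Defs.
From mathcomp Require Import all_boot.
From mathcomp Require Import zify.

Lemma sub_card (T : finType) (A : {set T}) (n : nat) :
  n <= #|A| -> exists B : {set T}, B \subset A /\ #|B| = n.
Proof.
elim: n => [|n IH] Hn.
  by exists set0; rewrite sub0set cards0.
have [B [BA cB]] := IH (ltnW Hn).
have : 0 < #|A :\: B|.
  by rewrite cardsD (setIidPr BA) cB; lia.
rewrite card_gt0 => /set0Pn [a]; rewrite inE => /andP [aB aA].
exists (a |: B); split.
  by rewrite subUset sub1set aA BA.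
by rewrite cardsU1 aB cB.
Qed.

Lemma split2 (T : Type) (x0 : T) (s : seq T) (i : nat) : i.+1 < size s ->
  s = take i s ++ nth x0 s i :: nth x0 s i.+1 :: drop i.+2 s.
Proof.
move=> H.
by rewrite -(drop_nth x0) // -(drop_nth x0) ?cat_take_drop //; apply: ltnW.
Qed.

Lemma head_cat_cons (T : Type) (u : T) s1 (a : T) t t' :
  head u (s1 ++ a :: t) = head u (s1 ++ a :: t').
Proof. by case: s1. Qed.

Lemma path_rev_sym (T : Type) (e : rel T) : symmetric e ->
  forall x p, path e x p -> path e (last x p) (rev (belast x p)).
Proof.
move=> es x p H; rewrite rev_path.
by rewrite (@eq_path _ _ e) // => a b /=; rewrite es.
Qed.

Lemma perm1 (T : eqType) (s1 Q s2 : seq T) (z w : T) :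
  perm_eq (s1 ++ z :: Q ++ w :: s2) (Q ++ (s1 ++ z :: w :: s2)).
Proof.
apply/permP => a; rewrite !count_cat /= !count_cat /=.
move: (count a s1) (count a Q) (count a s2) (nat_of_bool (a z)) (nat_of_bool (a w)) => n1 n2 n3 n4 n5.
lia.
Qed.

Lemma perm2 (T : eqType) (s1 Q mid s3 : seq T) (z1 w1 z2 w2 : T) :
  perm_eq (s1 ++ z1 :: Q ++ z2 :: rev (w1 :: mid) ++ w2 :: s3)
          (Q ++ (s1 ++ z1 :: w1 :: mid ++ z2 :: w2 :: s3)).
Proof.
apply/permP => a; rewrite !(count_cat, count_rev) /= !(count_cat, count_rev) /= count_cat count_rev /=.
move: (count a s1) (count a Q) (count a s3) (count a mid) (nat_of_bool (a z1)) (nat_of_bool (a w1))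
  (nat_of_bool (a z2)) (nat_of_bool (a w2)) => n1 n2 n3 n4 n5 n6 n7 n8.
lia.
Qed.

Lemma arith1 (k n b : nat) : 0 < k -> 2 * k <= b + n -> b <= 1 -> k <= n.
Proof. lia. Qed.

Theorem mainTheorem4 (T : finType) (e : rel T) (k : nat) :
  simple_graph e -> 0 < k -> k_connected e (2 * k) -> P2_kP1_free e k ->
  forall (u v : T) (p : seq T), u != v -> longest_path e u v p ->
  forall x y : T, x \notin path_vertices u p -> y \notin path_vertices u p ->
    ~~ e x y.
Proof.
move=> [eS eirr] k0 [cardT conn] free u v p uv [Pp Plong] x y.
rewrite /path_vertices !in_set => xP yP; apply/negP => exy.
move: Pp; rewrite /is_path => /and3P [Ppath /eqP Plast Puniq].
set s := u :: p.
have Ssorted : sorted e s by [].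
have Slast : last u s = v by [].
have Suniq : uniq s by [].
have Shead : head u s = u by [].
have xs : x \notin s := xP.
have ys : y \notin s := yP.
have Ssize : 1 < size s.
  rewrite /s /=; case: p Plast {Ppath Puniq Plong xP yP s Ssorted Slast Suniq Shead xs ys} => //= Pl.
  by rewrite Pl eqxx in uv.
have longer : forall l, sorted e l -> uniq l -> head u l = u -> last u l = v ->
    size l <= size s.
  case=> [|a l] // H1 H2 H3 H4; simpl in H3, H4; subst a.
  rewrite /= ltnS; apply: Plong; apply/and3P; split=> //; exact/eqP.
clearbody s.
pose e' := [rel a b | [&& e a b, a \notin s & b \notin s]].
have e'sym : symmetric e'.
  by move=> a b /=; rewrite eS; case: (e b a) (a \in s) (b \in s) => [] [] [].
have allp : forall z q, path e' z q -> all (fun w => w \notin s) q.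
  by move=> z q; elim: q z => [|w q IH] z //= /andP [/and3P [_ _ ->] /IH].
have Hx : forall z, connect e' x z -> z \notin s.
  move=> z /connectP [q Hq ->].
  have := mem_last x q; rewrite inE => /orP [/eqP -> //|].
  by move/(allP (allp _ _ Hq)).
have Hcl : forall z w, connect e' x z -> e z w -> w \notin s -> connect e' x w.
  move=> z w Hz ezw ws; apply: (connect_trans Hz); apply: connect1.
  by rewrite /= ezw ws Hx.
have Hpath : forall h1 h2, connect e' x h1 -> connect e' x h2 ->
    exists q, [/\ path e h1 q, last h1 q = h2, uniq (h1 :: q)
               & all (fun z => z \notin s) (h1 :: q)].
  move=> h1 h2 H1 H2.
  have : connect e' h1 h2.
    apply: connect_trans _ H2; by rewrite (sym_connect_sym e'sym).
  move=> /connectP [q Hq ->].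
  case: (shortenP Hq) => q' Hq' Hu _.
  exists q'; split=> //=; first by apply: sub_path Hq' => a b /andP [].
  by rewrite Hx // (allp _ _ Hq').
have noLonger : forall Q l, perm_eq l (Q ++ s) -> Q != [::] -> uniq Q ->
    all (fun z => z \notin s) Q -> sorted e l -> head u l = u -> last u l = v -> False.
  move=> Q l Hp Q0 UQ AQ Sl Hl Ll.
  have Ul : uniq l.
    rewrite (perm_uniq Hp) cat_uniq UQ Suniq andbT.
    apply/hasPn => z zs; apply/negP => zQ; have := allP AQ z zQ; by rewrite zs.
  have := longer l Sl Ul Hl Ll; rewrite (perm_size Hp) size_cat.
  by case: Q Q0 {Hp UQ AQ} => //= a Q _; rewrite addSn ltnNge leq_addl.
pose att z := (z \in s) && [exists h, connect e' x h && e h z].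
have reroute1 : forall s1 z w s2, s = s1 ++ z :: w :: s2 -> att z -> att w -> False.
  move=> s1 z w s2 Es /andP [_ /existsP [h1 /andP [H1 e1]]] /andP [_ /existsP [h2 /andP [H2 e2]]].
  have [q [Pq Lq Uq Aq]] := Hpath h1 h2 H1 H2.
  apply: (noLonger (h1 :: q) (s1 ++ z :: (h1 :: q) ++ w :: s2)) => //.
  - by rewrite Es perm1.
  - move: Ssorted; rewrite Es !sorted_cat_cons => /andP [-> /= /andP [_ Pw]].
    by rewrite eS e1 cat_path Pq Lq /= e2.
  - by rewrite (head_cat_cons _ _ _ _ _ (w :: s2)) -Es.
  - by rewrite -Slast Es !last_cat /= last_cat.
have reroute2 : forall s1 z1 w1 mid z2 w2 s3,
    s = s1 ++ z1 :: w1 :: mid ++ z2 :: w2 :: s3 -> att z1 -> att z2 -> e w1 w2 -> False.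
  move=> s1 z1 w1 mid z2 w2 s3 Es /andP [_ /existsP [h1 /andP [H1 e1]]]
    /andP [_ /existsP [h2 /andP [H2 e2]]] ew.
  have [q [Pq Lq Uq Aq]] := Hpath h1 h2 H1 H2.
  apply: (noLonger (h1 :: q) (s1 ++ z1 :: (h1 :: q) ++ z2 :: rev (w1 :: mid) ++ w2 :: s3)) => //.
  - by rewrite Es perm2.
  - move: Ssorted; rewrite Es !sorted_cat_cons => /andP [-> /= /andP [_]].
    rewrite cat_path /= => /and3P [Pm Lm /andP [_ Ps3]].
    have Hr : path e z2 (rev (w1 :: mid)).
      have := @path_rev_sym _ _ eS w1 (rcons mid z2).
      by rewrite last_rcons belast_rcons; apply; rewrite rcons_path Pm Lm.
    rewrite eS e1 cat_path Pq Lq /= e2 /= cat_path Hr /=.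
    by rewrite rev_cons last_rcons ew Ps3.
  - by rewrite (head_cat_cons _ _ _ _ _ (w1 :: mid ++ z2 :: w2 :: s3)) -Es.
  - by rewrite -Slast Es !last_cat /= !last_cat /= last_cat.
pose succ z := nth u s (index z s).+1.
have Sv : nth u s (size s).-1 = v by rewrite nth_last.
have idxlt : forall z, z \in s -> z != v -> (index z s).+1 < size s.
  move=> z zs zv; have := index_mem z s; rewrite zs => H.
  rewrite ltn_neqAle H andbT; apply: contra zv => /eqP Hs.
  by rewrite -Sv -Hs /= nth_index.
have decomp : forall z, z \in s -> z != v ->
    s = take (index z s) s ++ z :: succ z :: drop (index z s).+2 s.
  move=> z zs zv; by rewrite {1}(split2 _ u _ _ (idxlt z zs zv)) nth_index.
pose S := [set z | att z].
have bigS : 2 * k <= #|S|.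
  rewrite leqNgt; apply/negP => HS.
  have [w [ws wS]] : exists w, w \in s /\ w \notin S.
    have E := split2 _ u _ _ Ssize.
    case A0: (att (nth u s 0)).
      exists (nth u s 1); split; first by apply: mem_nth.
      rewrite inE; apply/negP => A1; exact: reroute1 E A0 A1.
    by exists (nth u s 0); split; [apply: mem_nth; apply: ltnW | rewrite inE A0].
  have xnS : x \notin S by rewrite inE /att (negbTE xs).
  have [r /andP [Pr Ar]] := conn S HS x w xnS wS.
  have key : forall z r, connect e' x z -> path e z r ->
      all (fun t => t \notin S) r -> connect e' x (last z r).
    move=> z0 r0; elim: r0 z0 => [|t r0 IH] z0 //= Hz /andP [ezt Pr0] /andP [tS Ar0].
    apply: IH => //; apply: (Hcl z0) => //.
    apply/negP => ts; move/negP: tS; apply; rewrite inE /att ts /=.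
    by apply/existsP; exists z0; rewrite Hz.
  move: Pr => /and3P [Pr /eqP Lr _]; move/andP: Ar => [_ Ar].
  by have := key x r (connect0 _ _) Pr Ar; rewrite Lr => /Hx; rewrite ws.
pose S' := S :\ v.
have cS' : k <= #|S'|.
  have := cardsD1 v S; rewrite -/S' => H; move: bigS; rewrite H.
  by move=> H2; apply: arith1 k0 H2 (leq_b1 _).
have S'P : forall z, z \in S' -> [/\ z \in s, z != v & att z].
  move=> z; rewrite !inE => /andP [zv Az]; split=> //; by case/andP: Az.
have inj : {in S' &, injective succ}.
  move=> z1 z2 H1 H2 Heq.
  have [zs1 zv1 _] := S'P _ H1; have [zs2 zv2 _] := S'P _ H2.
  have := nth_uniq u (idxlt _ zs1 zv1) (idxlt _ zs2 zv2) Suniq.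
  rewrite /succ in Heq; rewrite Heq eqxx eqSS => /esym /eqP Hidx.
  by rewrite -(nth_index u zs1) Hidx nth_index.
pose X0 := succ @: S'.
have cX0 : #|X0| = #|S'| := card_in_imset inj.
have hk : k <= #|X0| by rewrite cX0.
have [X [XX0 cX]] := @sub_card T X0 k hk.
have XP : forall a, a \in X -> exists2 z, z \in S' & a = succ z.
  by move=> a /(subsetP XX0) /imsetP.
have nonadjH : forall z, z \in S' -> forall h, connect e' x h -> ~~ e h (succ z).
  move=> z zS h Hh; apply/negP => ehs.
  have [zs zv Az] := S'P z zS.
  apply: (reroute1 _ _ _ _ (decomp z zs zv) Az).
  rewrite /att mem_nth ?idxlt //=; apply/existsP; exists h; by rewrite Hh ehs.
have nonadj2 : forall z1 z2, z1 \in S' -> z2 \in S' ->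
    index z1 s < index z2 s -> ~~ e (succ z1) (succ z2).
  move=> z1 z2 H1 H2 lt; apply/negP => ew.
  have [zs1 zv1 A1] := S'P _ H1; have [zs2 zv2 A2] := S'P _ H2.
  case: (ltnP (index z1 s).+1 (index z2 s)) => hij.
  - have Ed : drop (index z1 s).+2 s = take (index z2 s - (index z1 s).+2) (drop (index z1 s).+2 s)
        ++ z2 :: succ z2 :: drop (index z2 s).+2 s.
      rewrite -{1}(cat_take_drop (index z2 s - (index z1 s).+2) (drop (index z1 s).+2 s)).
      rewrite drop_drop subnK //; congr (_ ++ _).
      have Hi2 := idxlt _ zs2 zv2.
      by rewrite (@drop_nth _ u _ _ (ltnW Hi2)) (@drop_nth _ u _ _ Hi2) nth_index.
    apply: (reroute2 _ _ _ _ _ _ _ _ A1 A2 ew).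
    by rewrite {1}(decomp z1 zs1 zv1) {1}Ed.
  - have Ej : index z2 s = (index z1 s).+1 by apply/eqP; rewrite eqn_leq hij lt.
    apply: (reroute1 _ _ _ _ (decomp z1 zs1 zv1) A1).
    by rewrite /succ -Ej nth_index.
apply: free; exists x, y, X; split; [split=> // | split].
- apply/negP => /XP [z zS Ez]; have [zs zv _] := S'P _ zS.
  by move: xs; rewrite Ez mem_nth ?idxlt.
- apply/negP => /XP [z zS Ez]; have [zs zv _] := S'P _ zS.
  by move: ys; rewrite Ez mem_nth ?idxlt.
- by apply/negP => /eqP Exy; move: exy; rewrite Exy eirr.
- move=> a b /XP [z1 H1 ->] /XP [z2 H2 ->].
  case: (ltngtP (index z1 s) (index z2 s)) => H.
  + exact: nonadj2.
  + by rewrite eS; apply: nonadj2.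
  + have [zs1 _ _] := S'P _ H1; have [zs2 _ _] := S'P _ H2.
    have E : z1 = z2 by rewrite -(nth_index u zs1) H nth_index.
    by rewrite E eirr.
- move=> a /XP [z zS ->].
  rewrite nonadjH ?connect0 //= nonadjH //.
  by apply: connect1; rewrite /= exy xs ys.
Qed.
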